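(* Let $\delta=x^{\mathbf d}f(\theta)$ be a homogeneous differential operator of degree $\mathbf d$ (with $\mathbf d\ne\mathbf 0$, $-\mathbf d\in S$), let $\mathcal B\subseteq\mathbb N^n$ be compatible with $\mathbf d$, and let $I=(x^{\mathbf a}\mid \mathbf a\in W_{\mathcal B})$. Then $I$ is $\delta$-compatible. In particular, if $\mathbf b\in W_{\mathcal B}$ and $\operatorname{val}(\mathbf b)$ is finite, then $\operatorname{vpt}(\mathbf b)\in W_{\mathcal B}$.
   Context: Standing notation. Fix $d\ge 1$. Let $\sigma\subseteq\mathbb R^d$ be a full-dimensional, strongly convex rational polyhedral cone, so $\sigma^\vee$ is full-dimensional and strongly convex. $S=\sigma^\vee\cap\mathbb Z^d$, $R=\mathbb C[S]$ with monomial basis $x^{\mathbf a}$, $\mathbf a\in S$. $h_1,\dots,h_n$ are the primitive support functions of the facets of $\sigma^\vee$, so $S=\{\mathbf a\in\mathbb Z^d:h_i(\mathbf a)\ge0\ \forall i\}$. $(g,m)!=\prod_{j=0}^m(g-j)$ for $m\ge0$, $=1$ for $m<0$; $H_{\mathbf d}=\prod_i(h_i,h_i(-\mathbf d)-1)!$. For $f$ divisible by $H_{\mathbf d}$, $\delta=x^{\mathbf d}f(\theta)$ acts by $\delta(x^{\mathbf a})=f(\mathbf a)x^{\mathbf a+\mathbf d}$. $I$ is $\delta$-compatible if $\delta(I)\subseteq I$. $V_{\mathrm{mon}}(f)=\{\mathbf a\in\mathbb Z^d:f(\mathbf a)=0\}$. Assume $\mathbf d\ne\mathbf 0$ and $-\mathbf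 d\in S$; write $\mathbf d=q\mathbf e$ with $q\in\mathbb Z_{\ge1}$ and $\mathbf e\in\mathbb Z^d$ primitive. For $\mathbf a\in\mathbb Z^d$ let $\operatorname{val}(\mathbf a)=\inf\{t\in\mathbb R:\mathbf a+t\mathbf d\in V_{\mathrm{mon}}(f)\}\in\mathbb R\cup\{\pm\infty\}$ (with $\inf\emptyset=+\infty$). When $\operatorname{val}(\mathbf a)$ is finite, let $\operatorname{pval}(\mathbf a)=\max\{t\in[\operatorname{val}(\mathbf a),\operatorname{val}(\mathbf a)+1):\mathbf a+t\mathbf d\in V_{\mathrm{mon}}(f)\}$ (such $t$ lie in $\frac1q\mathbb Z$, so the max exists) and $\operatorname{vpt}(\mathbf a)=\mathbf a+\operatorname{pval}(\mathbf a)\mathbf d\in\mathbb Z^d$. A tuple $\beta\in\mathbb N^n$ is compatible with $\mathbf d$ if for every $i$, $\beta_i=0$ or $h_i(\mathbf d)=0$; a set $\mathcal B\subseteq\mathbb N^n$ is compatible with $\mathbf d$ if each of its elements is. $W_\beta=\{\mathbf a\in S: h_i(\mathbf a)\ge\beta_i\ \forall i\}$ and $W_{\mathcal B}=\bigcup_{\beta\in\mathcal B}W_\beta$. *)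

(* Defs.v *)
From HB Require Import structures.
From mathcomp Require Import all_boot all_order all_algebra.
From mathcomp Require Import complex.
From mathcomp Require Import Rstruct.
From mathcomp Require Import mpoly.

Set Implicit Arguments.
Unset Strict Implicit.
Unset Printing Implicit Defensive.

Import Order.TTheory GRing.Theory Num.Theory.
Local Open Scope ring_scope.

Definition CC : numClosedFieldType := (complex Rdefinitions.R).

(** Lattice points of Z^d are integer row vectors; linear forms with integer
    coefficients are also given by integer row vectors. *)
Definition hval (d : nat) (h a : 'rV[int]_d) : int := \sum_(j < d) h 0 j * a 0 j.

Definition hvalQ (d : nat) (h : 'rV[int]_d) (v : 'rV[rat]_d) : rat :=
  \sum_(j < d) (h 0 j)%:~R * v 0 j.

Definition ratv (d : nat) (a : 'rV[int]_d) : 'rV[rat]_d := map_mx (fun z : int => z%:~R) a.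

Definition in_dual_cone (d n : nat) (h : 'I_n -> 'rV[int]_d) (v : 'rV[rat]_d) : Prop :=
  forall i, 0 <= hvalQ (h i) v.

Definition inS (d n : nat) (h : 'I_n -> 'rV[int]_d) (a : 'rV[int]_d) : Prop :=
  forall i, 0 <= hval (h i) a.

Definition full_dimensional (d n : nat) (h : 'I_n -> 'rV[int]_d) : Prop :=
  exists M : 'M[rat]_d, \rank M = d /\ forall k, in_dual_cone h (row k M).

Definition strongly_convex (d n : nat) (h : 'I_n -> 'rV[int]_d) : Prop :=
  forall v : 'rV[rat]_d, in_dual_cone h v -> in_dual_cone h (- v) -> v = 0.

Definition primitive_form (d : nat) (h : 'rV[int]_d) : Prop :=
  \big[gcdn/0%N]_(j < d) `|h ord0 j|%N = 1%N.

Definition defines_facet (d n : nat) (h : 'I_n -> 'rV[int]_d) (i : 'I_n) : Prop :=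
  exists M : 'M[rat]_(d.-1, d), \rank M = d.-1 /\
    forall k, in_dual_cone h (row k M) /\ hvalQ (h i) (row k M) = 0.

Definition facet_support_functions (d n : nat) (h : 'I_n -> 'rV[int]_d) : Prop :=
  [/\ full_dimensional h, strongly_convex h,
      (forall i, primitive_form (h i)), (forall i, defines_facet h i)
    & injective h].

(** Polynomials in theta = (theta_1, ..., theta_d), complex coefficients. *)
Definition hpoly (d : nat) (h : 'rV[int]_d) : {mpoly CC[d]} :=
  \sum_(j < d) (h 0 j)%:~R *: 'X_j.

Definition ffact (d : nat) (g : {mpoly CC[d]}) (m : int) : {mpoly CC[d]} :=
  match m with
  | Posz k => \prod_(j < k.+1) (g - j%:R)
  | Negz _ => 1
  end.

Definition Hpoly (d n : nat) (h : 'I_n -> 'rV[int]_d) (dv : 'rV[int]_d) : {mpoly CC[d]} :=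
  \prod_(i < n) ffact (hpoly (h i)) (hval (h i) (- dv) - 1).

Definition mdivides (d : nat) (p q : {mpoly CC[d]}) : Prop :=
  exists g : {mpoly CC[d]}, q = p * g.

Definition feval (d : nat) (f : {mpoly CC[d]}) (a : 'rV[int]_d) : CC :=
  f.@[fun j => (a 0 j)%:~R].

(** Elements of R = C[S], represented by their coefficient functions
    a |-> (coefficient of x^a): finitely supported, with support in S. *)
Definition coefs (d : nat) := 'rV[int]_d -> CC.

Definition inR (d n : nat) (h : 'I_n -> 'rV[int]_d) (c : coefs d) : Prop :=
  (exists s : seq 'rV[int]_d, forall a, c a != 0 -> a \in s) /\
  (forall a, c a != 0 -> inS h a).

Definition inWbeta (d n : nat) (h : 'I_n -> 'rV[int]_d) (beta : 'I_n -> nat)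
  (a : 'rV[int]_d) : Prop :=
  inS h a /\ forall i, (beta i)%:Z <= hval (h i) a.

Definition inWB (d n : nat) (h : 'I_n -> 'rV[int]_d) (B : ('I_n -> nat) -> Prop)
  (a : 'rV[int]_d) : Prop :=
  exists2 beta, B beta & inWbeta h beta a.

Definition compatible_tuple (d n : nat) (h : 'I_n -> 'rV[int]_d) (dv : 'rV[int]_d)
  (beta : 'I_n -> nat) : Prop :=
  forall i, beta i = 0%N \/ hval (h i) dv = 0.

Definition compatible_set (d n : nat) (h : 'I_n -> 'rV[int]_d) (dv : 'rV[int]_d)
  (B : ('I_n -> nat) -> Prop) : Prop :=
  forall beta, B beta -> compatible_tuple h dv beta.

(** The ideal I = (x^a | a in W_B) of R: the finite sums  sum_t r_t * x^(a_t)
    with r_t in R and a_t in W_B; the coefficient of x^b in r * x^a is r(b - a). *)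
Definition inIdealWB (d n : nat) (h : 'I_n -> 'rV[int]_d) (B : ('I_n -> nat) -> Prop)
  (c : coefs d) : Prop :=
  exists (k : nat) (r : 'I_k -> coefs d) (a : 'I_k -> 'rV[int]_d),
    (forall t, inR h (r t) /\ inWB h B (a t)) /\
    forall b, c b = \sum_(t < k) r t (b - a t).

(** delta = x^d f(theta): delta(x^a) = f(a) x^(a+d), extended linearly;
    so the coefficient of x^b in delta(c) is f(b - d) c(b - d). *)
Definition delta (d : nat) (f : {mpoly CC[d]}) (dv : 'rV[int]_d) (c : coefs d) : coefs d :=
  fun b => feval f (b - dv) * c (b - dv).

Definition delta_compatible (d : nat) (I : coefs d -> Prop) (f : {mpoly CC[d]})
  (dv : 'rV[int]_d) : Prop :=
  forall c, I c -> I (delta f dv c).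

(** t is in the set { t : a + t d in V_mon(f) }.  Since d is a nonzero integer
    vector, any real t with a + t d in Z^d is rational, so t ranges over Q. *)
Definition in_Vline (d : nat) (f : {mpoly CC[d]}) (dv a : 'rV[int]_d) (t : rat) : Prop :=
  exists z : 'rV[int]_d, ratv z = ratv a + t *: ratv dv /\ feval f z = 0.

Definition val_finite (d : nat) (f : {mpoly CC[d]}) (dv a : 'rV[int]_d) : Prop :=
  (exists t, in_Vline f dv a t) /\ (exists w, forall t, in_Vline f dv a t -> w <= t).

Definition is_val (d : nat) (f : {mpoly CC[d]}) (dv a : 'rV[int]_d) (v : rat) : Prop :=
  (forall t, in_Vline f dv a t -> v <= t) /\
  (forall w, (forall t, in_Vline f dv a t -> w <= t) -> w <= v).

Definition is_pval (d : nat) (f : {mpoly CC[d]}) (dv a : 'rV[int]_d) (v p : rat) : Prop :=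
  [/\ in_Vline f dv a p, v <= p, p < v + 1 &
      forall t, in_Vline f dv a t -> v <= t -> t < v + 1 -> t <= p].

(* Main.v *)
Require Import Defs.
From HB Require Import structures.
From mathcomp Require Import all_boot all_order all_algebra.
From mathcomp Require Import complex Rstruct mpoly zify lra.
Import Order.TTheory GRing.Theory Num.Theory.
Local Open Scope ring_scope.

Lemma hvalD d (h a b : 'rV[int]_d) : hval h (a + b) = hval h a + hval h b.
Proof. by rewrite /hval -big_split /=; apply: eq_bigr => j _; rewrite mxE mulrDr. Qed.

Lemma hvalN d (h a : 'rV[int]_d) : hval h (- a) = - hval h a.
Proof. by rewrite /hval -sumrN; apply: eq_bigr => j _; rewrite mxE mulrN. Qed.

Lemma hvalB d (h a b : 'rV[int]_d) : hval h (a - b) = hval h a - hval h b.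
Proof. by rewrite hvalD hvalN. Qed.

Lemma hval0 d (h : 'rV[int]_d) : hval h 0 = 0.
Proof. by rewrite /hval big1 // => j _; rewrite mxE mulr0. Qed.

Lemma hvalMn d (h a : 'rV[int]_d) k : hval h (a *+ k) = hval h a *+ k.
Proof. elim: k => [|k IH]; first by rewrite !mulr0n hval0.
by rewrite !mulrS hvalD IH. Qed.

Lemma hvalQ_ratv d (h a : 'rV[int]_d) : hvalQ h (ratv a) = (hval h a)%:~R.
Proof. rewrite /hvalQ /hval rmorph_sum; apply: eq_bigr => j _.
by rewrite /ratv mxE rmorphM. Qed.

Lemma ratv_inj d : injective (@ratv d).
Proof. move=> a b e; apply/matrixP => i j.
by have := congr1 (fun m : 'M[rat]_(1,d) => m i j) e; rewrite /ratv !mxE => /intr_inj. Qed.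

Lemma feval_hpoly d (h a : 'rV[int]_d) : feval (hpoly h) a = (hval h a)%:~R.
Proof. rewrite /feval /hpoly /hval raddf_sum rmorph_sum; apply: eq_bigr => j _.
by rewrite /feval; apply: (etrans (mevalZ _ _ _)); rewrite mevalXU rmorphM. Qed.

Lemma feval_zero d n (h : 'I_n -> 'rV[int]_d) dv f w i :
  mdivides (Hpoly h dv) f ->
  0 <= hval (h i) w -> hval (h i) w < hval (h i) (- dv) -> feval f w = 0.
Proof.
move=> [g ->] Hw1 Hw2.
rewrite /feval mevalM; apply/eqP; rewrite mulf_eq0; apply/orP; left; apply/eqP.
rewrite /Hpoly (bigD1 i) //= mevalM; apply/eqP; rewrite mulf_eq0; apply/orP; left; apply/eqP.
rewrite /ffact.
case E: (hval (h i) (- dv) - 1) => [k|k].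
- have Hj : (`|hval (h i) w|%N < k.+1)%N.
    have : hval (h i) w <= k%:Z by lia.
    by case: (hval (h i) w) Hw1 => // m _; rewrite lez_nat ltnS.
  rewrite (bigD1 (Ordinal Hj)) //= mevalM; apply/eqP; rewrite mulf_eq0; apply/orP; left.
  rewrite mevalB -/(feval _ w) feval_hpoly.
  rewrite mevalMn meval1 natr_absz.
  by rewrite (ger0_norm Hw1) subrr.
- exfalso. have: hval (h i) (- dv) - 1 < 0 by rewrite E.
  lia.
Qed.
Lemma hvalQ_lin d (h : 'rV[int]_d) (u w : 'rV[rat]_d) (p : rat) :
  hvalQ h (u + p *: w) = hvalQ h u + p * hvalQ h w.
Proof.
rewrite /hvalQ mulr_sumr -big_split /=; apply: eq_bigr => j _.
by rewrite !mxE mulrDr mulrCA.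
Qed.

Lemma ratvB d (z dv : 'rV[int]_d) (kk : int) :
  ratv (z - kk *: dv) = ratv z - kk%:~R *: ratv dv.
Proof. by apply/matrixP => i j; rewrite /ratv !mxE rmorphB rmorphM. Qed.

Lemma hvalZ d (h dv : 'rV[int]_d) (kk : int) : hval h (kk *: dv) = kk * hval h dv.
Proof. rewrite /hval mulr_sumr; apply: eq_bigr => j _; rewrite mxE mulrCA. done. Qed.

Lemma part2 d n (h : 'I_n -> 'rV[int]_d) (f : {mpoly CC[d]}) (dv : 'rV[int]_d)
  (B : ('I_n -> nat) -> Prop) :
  inS h (- dv) -> mdivides (Hpoly h dv) f -> compatible_set h dv B ->
  forall b : 'rV[int]_d, inWB h B b ->
     forall v p : rat, is_val f dv b v -> is_pval f dv b v p ->
     forall z : 'rV[int]_d, ratv z = ratv b + p *: ratv dv -> inWB h B z.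
Proof.
move=> HS Hdiv Hcomp b [beta Bbeta [Sb Wb]] v p [Hv1 _] [_ _ Hpv _] z Hz.
have Hz' : forall i, (hval (h i) z)%:~R = (hval (h i) b)%:~R + p * (hval (h i) dv)%:~R :> rat.
  by move=> i; rewrite -!hvalQ_ratv Hz hvalQ_lin.
have Hz0 : forall i, hval (h i) dv = 0 -> hval (h i) z = hval (h i) b.
  by move=> i e; apply: (@intr_inj rat); rewrite Hz' e mulr0 addr0.
have Sz : inS h z.
  move=> i; case: (leP 0 (hval (h i) z)) => // Hneg; exfalso.
  have Hm0 := HS i.
  case: (eqVneq (hval (h i) dv) 0) => Hd.
    by move: (Sb i); rewrite -(Hz0 _ Hd) => /(lt_le_trans Hneg); rewrite ltxx.
  set A := hval (h i) z in Hneg; set m := hval (h i) (- dv) in Hm0.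
  have Hm : 0 < m by rewrite /m hvalN oppr_gt0 lt_neqAle Hd /=; move: Hm0; rewrite /m hvalN oppr_ge0.
  set q := ((- A - 1) %/ m)%Z; set r := ((- A - 1) %% m)%Z.
  have Eqr := divz_eq (- A - 1) m. rewrite -/q -/r in Eqr.
  have r0 : 0 <= r by apply: modz_ge0; rewrite gt_eqF.
  have rm : r < m by apply: ltz_pmod.
  have q0 : 0 <= q by rewrite divz_ge0 //; lia.
  set kk := q + 1.
  have Hw : hval (h i) (z - kk *: dv) = A + kk * m.
    by rewrite hvalB hvalZ /m hvalN mulrN.
  have F0 : feval f (z - kk *: dv) = 0.
    apply: (@feval_zero _ _ h dv f _ i Hdiv); rewrite Hw -/m; lia.
  have HV : in_Vline f dv b (p - kk%:~R).
    exists (z - kk *: dv); split => //.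
    by rewrite ratvB Hz scalerBl addrA.
  have := Hv1 _ HV. have : 1 <= kk%:~R :> rat by rewrite ler1z; lia.
  lra.
exists beta => //; split => // i.
case: (Hcomp _ Bbeta i) => [-> | Hd]; first exact: Sz.
by rewrite Hz0.
Qed.

Lemma part1 d n (h : 'I_n -> 'rV[int]_d) (f : {mpoly CC[d]}) (dv : 'rV[int]_d)
  (B : ('I_n -> nat) -> Prop) :
  inS h (- dv) -> mdivides (Hpoly h dv) f -> compatible_set h dv B ->
  delta_compatible (inIdealWB h B) f dv.
Proof.
move=> HS Hdiv Hcomp c [k [r [a [Hra Hc]]]].
have [s Hs] : exists s : 'I_k -> seq 'rV[int]_d, forall t b, r t b != 0 -> b \in s t.
  apply: (@fin_all_exists _ (fun _ => seq 'rV[int]_d) (fun t (l : seq 'rV[int]_d) => forall b, r t b != 0 -> b \in l)) => t; exact: (Hra t).1.1.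
set dc := delta f dv c.
set L := [seq y + a x + dv | x <- enum 'I_k, y <- s x].
have key : forall b, dc b != 0 -> b \in L /\ inWB h B b.
  move=> b; rewrite /dc /delta mulf_eq0 negb_or => /andP [Hf Hcb].
  rewrite Hc in Hcb.
  have [t Ht] : exists t, r t (b - dv - a t) != 0.
    case: (boolP [exists t, r t (b - dv - a t) != 0]) => [/existsP//|/existsPn H].
    by rewrite big1 ?eqxx in Hcb => // t _; apply/eqP; rewrite -[_ == _]negbK H.
  set e := b - dv - a t in Ht.
  have He : e \in s t := Hs _ _ Ht.
  have Se : inS h e := (Hra t).1.2 _ Ht.
  have [beta Bb [Sa Wa]] := (Hra t).2.
  have Eb : b = e + a t + dv by rewrite /e !subrK.
  split.
    by apply/allpairsPdep; exists t, e; split => //; rewrite mem_enum.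
  have Sb : inS h b.
    move=> i; case: (leP 0 (hval (h i) b)) => // Hneg; exfalso.
    have Hw : hval (h i) (b - dv) = hval (h i) e + hval (h i) (a t).
      by rewrite -hvalD /e subrK.
    have := Se i; have := Sa i; have := HS i; rewrite hvalN => H1 H2 H3.
    have : feval f (b - dv) = 0.
      apply: (@feval_zero _ _ h dv f _ i Hdiv); rewrite Hw ?hvalN.
        lia.
      move: Hneg; rewrite {1}Eb !hvalD; lia.
    by move/eqP; rewrite (negbTE Hf).
  exists beta => //; split => // i.
  case: (Hcomp _ Bb i) => [-> | Hd]; first exact: Sb.
  have := Se i; have := Wa i; rewrite Eb !hvalD Hd; lia.
set L2 := undup [seq b <- L | dc b != 0].
have HL2 : forall x, x \in L2 -> dc x != 0 /\ inWB h B x.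
  move=> x; rewrite mem_undup mem_filter => /andP [H1 H2]; split => //.
  exact: (key _ H1).2.
exists (size L2), (fun j u => if u == 0 then dc (nth 0 L2 j) else 0), (fun j => nth 0 L2 j).
split.
  move=> t; split; last by apply: (HL2 _ (mem_nth _ (ltn_ord t))).2.
  split.
    exists [:: 0] => u /=; case: (eqVneq u 0) => [-> _|Hu]; first by rewrite mem_seq1.
    by rewrite eqxx.
  move=> u /=; case: (eqVneq u 0) => [-> _|Hu]; last by rewrite eqxx.
  by move=> i; rewrite hval0.
move=> b.
transitivity (\sum_(x <- L2) (if b - x == 0 then dc x else 0)); last first.
  by rewrite (big_nth 0) big_mkord.
case: (boolP (b \in L2)) => Hb.
  rewrite (bigD1_seq b) //= ?undup_uniq // subrr eqxx big1 ?addr0 // => x Hx.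
  by rewrite subr_eq0 eq_sym (negbTE Hx).
rewrite big1_seq.
  case: (eqVneq (dc b) 0) => // Hne.
  by move: Hb; rewrite mem_undup mem_filter Hne (key _ Hne).1.
move=> x /= Hx; rewrite subr_eq0; case: eqP => // Ex.
by move: Hb; rewrite Ex Hx.
Qed.

Theorem mainTheorem6 (d n : nat) (h : 'I_n -> 'rV[int]_d)
  (f : {mpoly CC[d]}) (dv : 'rV[int]_d) (B : ('I_n -> nat) -> Prop) :
  (0 < d)%N ->
  facet_support_functions h ->
  dv != 0 ->
  inS h (- dv) ->
  mdivides (Hpoly h dv) f ->
  compatible_set h dv B ->
  delta_compatible (inIdealWB h B) f dv /\
  (forall b : 'rV[int]_d, inWB h B b -> val_finite f dv b ->
     forall v p : rat, is_val f dv b v -> is_pval f dv b v p ->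
     forall z : 'rV[int]_d, ratv z = ratv b + p *: ratv dv -> inWB h B z).
Proof.
move=> _ _ _ HS Hdiv Hcomp; split.
  exact: (@part1 d n h f dv B HS Hdiv Hcomp).
move=> b Hb _; exact: (@part2 d n h f dv B HS Hdiv Hcomp b Hb).
Qed.
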